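(* Let $V\in C^2(\mathbb{R})$ be even with $V(s)\ge As^2-B$ for all $s\in\mathbb{R}$ (some $A>0$, $B\in\mathbb{R}$) and $V''(s)\le C_2$ for all $s$ (some $C_2>0$). Then there exists a constant $C>0$ such that for every $x\in\mathbb{Z}^d$, every $\gamma\in\mathbb{R}$, every $\xi(x)\in\mathbb{R}$ and every choice of real values $\phi(y)$ for the $2d$ nearest neighbours $y$ of $x$, $$\int_{\mathbb{R}}\exp\Big[-\tfrac12\sum_{y\in\mathbb{Z}^d,|y-x|=1}V(\phi(y)-\phi(x))+\xi(x)\phi(x)\Big]\mathrm{d}\phi(x)\ \ge\ C\exp\Big[-\tfrac12\sum_{y\in\mathbb{Z}^d,|y-x|=1}V(\phi(y)-\gamma)+\xi(x)\gamma\Big].$$ *)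

(* Defs.v *)
From HB Require Import structures.
From mathcomp Require Import all_boot all_order all_algebra.
From mathcomp Require Import all_classical all_reals all_analysis.
Set Implicit Arguments. Unset Strict Implicit. Unset Printing Implicit Defensive.
Import Order.TTheory GRing.Theory Num.Theory.
Import numFieldNormedType.Exports.
Local Open Scope classical_set_scope.
Local Open Scope ring_scope.

Definition lattice (d : nat) := {ffun 'I_d -> int}.

(* The nearest neighbour x + e_i (s = true) or x - e_i (s = false).
   As (i, s) ranges over 'I_d * bool these are exactly the 2d points y
   of Z^d with |y - x| = 1, each listed once. *)
Definition nbr (d : nat) (x : lattice d) (i : 'I_d) (s : bool) : lattice d :=
  [ffun j => x j + (if j == i then (if s then 1 else -1) else 0)%R].

Definition C2fun (R : realType) (V : R -> R) : Prop :=
  (forall s : R, derivable V s 1) /\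
  (forall s : R, derivable (derive1 V) s 1) /\
  continuous (derive1n 2 V).

Definition nbr_energy (R : realType) (d : nat) (V : R -> R)
  (phi : lattice d -> R) (x : lattice d) (t : R) : R :=
  \sum_(i < d) \sum_(s : bool) V (phi (nbr x i s) - t).

(* Main.v *)
Require Import Defs.
From HB Require Import structures.
From mathcomp Require Import all_boot all_order all_algebra.
From mathcomp Require Import all_classical all_reals all_analysis.
From mathcomp Require Import measurable_realfun.
From mathcomp Require Import ring lra.
Import Order.TTheory GRing.Theory Num.Theory.
Import numFieldNormedType.Exports.
Local Open Scope classical_set_scope.
Local Open Scope ring_scope.
Set Implicit Arguments. Unset Strict Implicit.

Lemma mvt_eq (R : realType) (g : R -> R) a b : (forall s, derivable g s 1) -> a <= b ->
  exists2 c, c \in `[a,b] & g b - g a = derive1 g c * (b - a).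
Proof.
move=> dg ab; apply: MVT_segment => //.
  by move=> z _; rewrite derive1E; exact/derivableP/dg.
by apply: derivable_within_continuous => z _; exact: dg.
Qed.

Lemma mvt_ub (R : realType) (g : R -> R) (M : R) a b : (forall s, derivable g s 1) ->
  (forall s, derive1 g s <= M) -> a <= b -> g b - g a <= M * (b - a).
Proof.
move=> dg gM ab; have [c _ ->] := mvt_eq dg ab.
by rewrite ler_wpM2r ?subr_ge0.
Qed.

Lemma taylorV (R : realType) (V : R -> R) (C2 : R)
  (d1 : forall s, derivable V s 1) (d2 : forall s, derivable (derive1 V) s 1)
  (Hupp : forall s, derive1n 2 V s <= C2) (C0 : 0 <= C2) w h :
  V (w + h) <= V w + derive1 V w * h + C2 * h ^+ 2.
Proof.
have H2 : forall s, derive1 (derive1 V) s <= C2 by move=> s; have := Hupp s.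
have [hneg|hpos] := ltP h 0.
  have hw : w + h <= w by rewrite gerDl ltW.
  have [c] := mvt_eq d1 hw; rewrite in_itv /= => /andP[c1 c2] E.
  have H := mvt_ub d2 H2 c2.
  have H' : (derive1 V w - derive1 V c) * (- h) <= C2 * (w - c) * (- h).
    by rewrite ler_wpM2r // oppr_ge0 ltW.
  have H'' : C2 * (w - c) * (- h) <= C2 * h ^+ 2.
    rewrite expr2 -mulrA ler_wpM2l // -[h * h]mulrNN; apply: ler_pM; lra.
  have -> : V (w + h) = V w + derive1 V c * h by lra.
  lra.
have hw : w <= w + h by rewrite lerDl.
have [c] := mvt_eq d1 hw; rewrite in_itv /= => /andP[c1 c2] E.
have H := mvt_ub d2 H2 c1.
have H' : (derive1 V c - derive1 V w) * h <= C2 * (c - w) * h.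
  by rewrite ler_wpM2r.
have H'' : C2 * (c - w) * h <= C2 * h ^+ 2.
  rewrite expr2 -mulrA ler_wpM2l // ler_wpM2r //; lra.
have -> : V (w + h) = V w + derive1 V c * h by lra.
lra.
Qed.

Theorem lemma3p1 (R : realType) (d : nat) (V : R -> R)
  (HV : C2fun V)
  (Heven : forall s : R, V (- s) = V s)
  (A B : R) (HA : 0 < A) (Hlow : forall s : R, A * s ^+ 2 - B <= V s)
  (C2 : R) (HC2 : 0 < C2) (Hupp : forall s : R, derive1n 2 V s <= C2) :
  exists C : R, 0 < C /\
    forall (x : lattice d) (gamma xi : R) (phi : lattice d -> R),
      ((C * expR (- (1/2) * nbr_energy V phi x gamma + xi * gamma))%:E
       <= \int[lebesgue_measure]_(t in [set: R])
            (expR (- (1/2) * nbr_energy V phi x t + xi * t))%:E)%E.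
Proof.
case: HV => d1 [d2 _].
have Vc : continuous V.
  by move=> s; apply/differentiable_continuous; rewrite -derivable1_diffP.
set K := d%:R * C2.
have K0 : 0 <= K by rewrite mulr_ge0 // ltW.
exists (expR (- K)); split; first exact: expR_gt0.
move=> x gamma xi phi.
set E := nbr_energy V phi x.
set F := fun t => - (1/2) * E t + xi * t.
set S := \sum_(i < d) \sum_(s : bool) derive1 V (phi (nbr x i s) - gamma).
have HE : forall t, E t <= E gamma + S * (gamma - t) + (d%:R * 2) * (C2 * (gamma - t) ^+ 2).
  move=> t; rewrite /E /nbr_energy /S.
  apply: (@le_trans _ _ (\sum_(i < d) \sum_(s : bool) (V (phi (nbr x i s) - gamma)
      + derive1 V (phi (nbr x i s) - gamma) * (gamma - t) + C2 * (gamma - t) ^+ 2))).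
    apply: ler_sum => i _; apply: ler_sum => s _.
    have -> : phi (nbr x i s) - t = (phi (nbr x i s) - gamma) + (gamma - t) by ring.
    by apply: taylorV => //; exact: ltW.
  rewrite le_eqVlt; apply/orP; left; apply/eqP.
  have -> : (d%:R * 2) * (C2 * (gamma - t) ^+ 2) = \sum_(i < d) (C2 * (gamma - t) ^+ 2 + C2 * (gamma - t) ^+ 2).
    by rewrite sumr_const card_ord -mulr_natl; ring.
  rewrite mulr_suml -!big_split /=; apply: eq_bigr => i _; rewrite !big_bool /=; ring.
set a := S / 2 + xi.
have HF : forall t, F gamma + a * (t - gamma) - K * (t - gamma) ^+ 2 <= F t.
  move=> t; have := HE t; rewrite /F /a /K; lra.
have [l Hl] : exists l, forall t, l <= t <= l + 1 -> F gamma - K <= F t.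
  have [a0|a0] := leP 0 a.
    exists gamma => t /andP[t1 t2]; have := HF t.
    have h1 : 0 <= a * (t - gamma) by rewrite mulr_ge0 // subr_ge0.
    have h3 : (t - gamma) ^+ 2 <= 1 by rewrite expr2; nra.
    have h2 : K * (t - gamma) ^+ 2 <= K by rewrite -[X in _ <= X]mulr1 ler_wpM2l.
    lra.
  exists (gamma - 1) => t /andP[t1 t2]; have := HF t.
  have h1 : 0 <= a * (t - gamma) by apply: mulr_le0; lra.
  have h3 : (t - gamma) ^+ 2 <= 1 by rewrite expr2; nra.
  have h2 : K * (t - gamma) ^+ 2 <= K by rewrite -[X in _ <= X]mulr1 ler_wpM2l.
  lra.
have mF : measurable_fun [set: R] (fun t => expR (F t)).
  apply: measurableT_comp; first exact: (continuous_measurable_fun (@continuous_expR R)).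
  apply: measurable_funD.
    apply: measurable_funM; first exact: measurable_cst.
    rewrite /E /nbr_energy.
    apply: measurable_sum => i; apply: measurable_sum => s.
    apply: measurableT_comp; first exact: continuous_measurable_fun.
    apply: measurable_funB; [exact: measurable_cst | exact: measurable_id].
  apply: measurable_funM; [exact: measurable_cst | exact: measurable_id].
have -> : expR (- K) * expR (F gamma) = expR (F gamma - K) by rewrite -expRD addrC.
pose I : set R := [set` `[l, l + 1]%R].
have H2 : (\int[lebesgue_measure]_(t in I) (expR (F t))%:E <=
   \int[lebesgue_measure]_(t in [set: R]) (expR (F t))%:E)%E.
  apply: ge0_subset_integral => //=; first exact: measurable_itv.
  by apply/measurable_EFinP; exact: mF.
apply: le_trans H2.
have H1 : (\int[lebesgue_measure]_(t in I) (cst (expR (F gamma - K))%:E t) <=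
   \int[lebesgue_measure]_(t in I) (expR (F t))%:E)%E.
  apply: ge0_le_integral => //=.
  - exact: measurable_itv.
  - by apply/measurable_EFinP; exact: (measurable_funS measurableT (@subsetT _ I) mF).
  - move=> t; rewrite /I /= in_itv /= => Ht.
    by rewrite lee_fin ler_expR; apply: Hl.
apply: le_trans H1.
rewrite integral_cst /=; last exact: measurable_itv.
rewrite lebesgue_measure_itv /= lte_fin ltrDl ltr01 -EFinD.
by rewrite (_ : l + 1 - l = 1) ?mule1 //; ring.
Qed.
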